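(* Let $X$ and $Y$ be metric spaces and let $f:X\to Y$ be a local homeomorphism. Suppose that $Y$ is $\mathcal P$-connected and locally $\mathcal P$-contractible for some family $\mathcal P$ of paths in $Y$. Then $f$ is a covering projection if and only if $f$ has the continuation property for every path in $\mathcal P$.
   Context: A family $\mathcal P$ of continuous paths $p:[0,1]\to Y$ in a metric space $Y$ is given. $Y$ is $\mathcal P$-connected if (i) whenever $p\in\mathcal P$, the reverse path $\bar p(t)=p(1-t)$ belongs to $\mathcal P$, and (ii) every two points of $Y$ can be joined by a path in $\mathcal P$. $Y$ is locally $\mathcal P$-contractible if every $y_0\in Y$ has an open neighborhood $U$ with a continuous homotopy $H:U\times[0,1]\to U$ such that $H(y_0,t)=y_0$ for all $t$, $H(y,0)=y_0$ and $H(y,1)=y$ for all $y\in U$, and for every $y\in U$ the path $t\mapsto H(y,t)$ belongs to $\mathcal P$. A continuous map $f:X\to Y$ has the continuation property for a path $p:[0,1]\to Y$ if for every $b\in(0,1]$ and every continuous path $q:[0,b)\to X$ with $f\circ q=p$ on $[0,b)$, there exists a sequence $(t_n)$ in $[0,b)$ converging to $b$ such that $(q(t_n))$ converges in $X$. *)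

(* Defs.v *)
From HB Require Import structures.
From mathcomp Require Import all_boot all_order all_algebra.
From mathcomp Require Import all_classical all_reals all_analysis.
Set Implicit Arguments. Unset Strict Implicit. Unset Printing Implicit Defensive.
Import Order.TTheory GRing.Theory Num.Theory.
Import numFieldNormedType.Exports.
Local Open Scope classical_set_scope.
Local Open Scope ring_scope.

(* A path in Y is represented by a function p : R -> Y; only its values on
   [0,1] matter.  A family of paths is a set of such functions. *)

Definition in_family {R : realType} {Y : Type} (P : set (R -> Y)) (q : R -> Y) :=
  exists2 p, P p & {in `[0, 1], p =1 q}.

Definition path_family {R : realType} {Y : topologicalType} (P : set (R -> Y)) :=
  forall p, P p -> {within `[0, 1], continuous p}.

Definition P_connected {R : realType} {Y : Type} (P : set (R -> Y)) :=
  (forall p, P p -> in_family P (fun t => p (1 - t))) /\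
  (forall a b : Y, exists2 p, P p & p 0 = a /\ p 1 = b).

Definition locally_P_contractible {R : realType} {Y : topologicalType}
    (P : set (R -> Y)) :=
  forall y0 : Y, exists U : set Y, exists H : Y -> R -> Y,
    [/\ open U /\ U y0,
        {within U `*` `[0, 1], continuous (fun z : Y * R => H z.1 z.2)},
        (forall y t, U y -> t \in `[0, 1] -> U (H y t)),
        (forall t, t \in `[0, 1] -> H y0 t = y0) &
        (forall y, U y -> [/\ H y 0 = y0, H y 1 = y & in_family P (H y)])].

Definition homeo_onto {X Y : topologicalType} (f : X -> Y) (V : set X) (W : set Y) :=
  [/\ set_bij V W f, {within V, continuous f} &
      exists g : Y -> X, [/\ {in W, forall y, V (g y) /\ f (g y) = y} &
                             {within W, continuous g}]].

Definition local_homeomorphism {X Y : topologicalType} (f : X -> Y) :=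
  forall x : X, exists V : set X,
    [/\ open V, V x, open (f @` V) & homeo_onto f V (f @` V)].

Definition evenly_covered {X Y : topologicalType} (f : X -> Y) (U : set Y) :=
  exists (I : Type) (V : I -> set X),
    [/\ forall i, open (V i),
        forall i j, i <> j -> V i `&` V j = set0,
        \bigcup_i V i = f @^-1` U &
        forall i, homeo_onto f (V i) U].

Definition covering_projection {X Y : topologicalType} (f : X -> Y) :=
  continuous f /\
  forall y : Y, exists U : set Y, [/\ open U, U y & evenly_covered f U].

Definition continuation_property {R : realType} {X Y : topologicalType}
    (f : X -> Y) (p : R -> Y) :=
  forall (b : R) (q : R -> X), b \in `]0, 1] ->
    {within `[0, b[, continuous q} ->
    {in `[0, b[, forall t, f (q t) = p t} ->
    exists t : nat -> R,
      [/\ forall n, t n \in `[0, b[, t @ \oo --> b &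
          exists l : X, (q \o t) @ \oo --> l].

(* Main.v *)
Require Import Defs.
From HB Require Import structures.
From mathcomp Require Import all_boot all_order all_algebra.
From mathcomp Require Import all_classical all_reals all_analysis.
From mathcomp.algebra_tactics Require Import ring lra.
Set Implicit Arguments. Unset Strict Implicit. Unset Printing Implicit Defensive.
Import Order.TTheory GRing.Theory Num.Theory.
Import numFieldNormedType.Exports.
Local Open Scope classical_set_scope.
Local Open Scope ring_scope.
Section RI.
Variable R : realType.

Lemma real_ind (a c : R) (A : R -> Prop) :
  (forall t, a <= t -> t <= c -> (forall s, a <= s -> s < t -> A s) -> A t) ->
  (forall t, a <= t -> t < c -> A t ->
     exists2 e, 0 < e & forall s, t < s -> s < t + e -> s <= c -> A s) ->
  forall t, a <= t -> t <= c -> A t.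
Proof.
move=> H1 H2 t0 at0 t0c; apply: contrapT => nAt0.
pose B := [set t | a <= t /\ t <= c /\ ~ A t].
have B0 : B t0 by [].
have lbB : lbound B a by move=> y [].
have nB : nonempty B by exists t0.
set m := inf B.
have am : a <= m by apply: lb_le_inf.
have mB : lbound B m by apply: ge_inf; exists a.
have mt0 : m <= t0 by apply: mB.
have Am : A m.
  apply: H1 => //; first exact: le_trans mt0 t0c.
  move=> s a_s sm; apply: contrapT => nAs.
  have : m <= s by apply: mB; split => //; split => //;
    apply: ltW; apply: lt_le_trans sm (le_trans mt0 t0c).
  by rewrite leNgt sm.
have mt0' : m < t0.
  by rewrite lt_neqAle mt0 andbT; apply/eqP => emt; apply: nAt0; rewrite -emt.
have [e e0 He] := H2 m am (lt_le_trans mt0' t0c) Am.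
have : m + e <= m.
  apply: lb_le_inf => // y [ay [yc nAy]].
  rewrite leNgt; apply/negP => ylt.
  have my : m <= y by apply: mB.
  move: my; rewrite le_eqVlt => /orP[/eqP emy|my]; first by apply: nAy; rewrite -emy.
  by apply: nAy; apply: He.
by rewrite gerDl leNgt e0.
Qed.
End RI.
Section Basic.
Variable R : realType.
Definition Icc (a c : R) := [set s : R | a <= s <= c].
Definition cw {T : topologicalType} (A : set R) (q : R -> T) :=
  forall t, A t -> q @ within A (nbhs t) --> q t.

Lemma cwP {T : topologicalType} (A : set R) (q : R -> T) :
  {within A, continuous q} <-> cw A q.
Proof. exact: subspace_continuousP. Qed.

Lemma cwW {T : topologicalType} (A B : set R) (q : R -> T) :
  B `<=` A -> cw A q -> cw B q.
Proof.
move=> BA /cwP cq; apply/cwP; exact: continuous_subspaceW cq.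
Qed.

Lemma near_withinR (A : set R) t (P : R -> Prop) :
  (\forall s \near within A (nbhs t), P s) <->
  exists2 e : R, 0 < e & forall s, A s -> `|s - t| < e -> P s.
Proof.
split.
  rewrite /within /= => /nbhs_ballP -[e e0 He]; exists e => // s As st.
  apply: He => //; rewrite -ball_normE /= distrC; exact: st.
move=> [e e0 He]; rewrite /within /=; apply/nbhs_ballP; exists e => // s /= ts As.
apply: He => //; move: ts; rewrite -ball_normE /= distrC; exact.
Qed.
End Basic.
Section LH.
Variables (R : realType) (X Y : metricType R) (f : X -> Y).
Hypothesis lh : local_homeomorphism f.

Lemma lh_chart x : exists V : set X, exists g : Y -> X,
  [/\ open V /\ V x, open (f @` V),
      (forall z, V z -> g (f z) = z),
      (forall y, (f @` V) y -> V (g y) /\ f (g y) = y) &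
      {in f @` V, continuous g}].
Proof.
have [V [oV Vx oW [bij cf [g [gW cg]]]]] := lh x.
exists V, g; split => //.
- move=> z Vz; have fzW : (f @` V) (f z) by exists z.
  have [Vg fg] := gW _ (mem_set fzW).
  by apply: (set_bij_inj bij) => //; apply: mem_set.
- by move=> y Wy; apply: gW; apply: mem_set.
- by rewrite -continuous_open_subspace.
Qed.

Lemma lh_cont : continuous f.
Proof.
move=> x; have [V [oV Vx oW [bij cf _]]] := lh x.
move: cf; rewrite continuous_open_subspace //; apply; exact: mem_set.
Qed.

Lemma near_left (a t : R) (P : R -> Prop) : a < t ->
  (forall s, a < s -> s < t -> P s) -> \forall s \near t^'-, P s.
Proof.
move=> a_t HP; apply/(near_withinR (fun u => u < t)); exists (t - a).
  by rewrite /=; lra.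
move=> s st; rewrite ltr_norml => /andP[h1 h2]; apply: HP => //; lra.
Qed.

Lemma at_left_within (a c t : R) : a < t -> t <= c ->
  t^'- `=>` within (Icc a c) (nbhs t).
Proof.
move=> a_t tc P /near_withinR [e e0 HP].
apply: filter_app (near_left a_t (fun s h1 h2 => h1)).
apply/(near_withinR (fun u => u < t)); exists e => // s st hs ha.
by apply: HP => //; rewrite /Icc /= (ltW ha) (le_trans (ltW st) tc).
Qed.

Lemma lift_uniq (q1 q2 : R -> X) (a c : R) :
  cw (Icc a c) q1 -> cw (Icc a c) q2 ->
  (forall s, a <= s -> s <= c -> f (q1 s) = f (q2 s)) -> q1 a = q2 a ->
  forall s, a <= s -> s <= c -> q1 s = q2 s.
Proof.
move=> c1 c2 fq qa; apply: real_ind.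
  move=> t a_t tc IH; have [->//|ta] := eqVneq t a.
  have {}a_t : a < t by rewrite lt_neqAle eq_sym ta.
  have Ht : Icc a c t by rewrite /Icc /= (ltW a_t) tc.
  have h1 : q1 @ t^'- --> q1 t.
    apply: cvg_trans (c1 t Ht); apply: cvg_fmap2; exact: at_left_within.
  have h2 : q2 @ t^'- --> q2 t.
    apply: cvg_trans (c2 t Ht); apply: cvg_fmap2; exact: at_left_within.
  have h3 : q2 @ t^'- --> q1 t.
    apply: cvg_trans h1; apply: near_eq_cvg.
    apply: (near_left a_t) => s hs1 hs2.
    by apply: IH => //; apply: ltW.
  exact: (@cvg_unique X (@metric_hausdorff _ X) _ _ _ _ h3 h2).
move=> t a_t tc eqt.
have [V [g [[oV Vx] oW gf fg cg]]] := lh_chart (q1 t).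
have Ht : Icc a c t by rewrite /Icc /= a_t (ltW tc).
have n1 := c1 t Ht V (open_nbhs_nbhs (conj oV Vx)).
have Vx2 : V (q2 t) by rewrite -eqt.
have n2 := c2 t Ht V (open_nbhs_nbhs (conj oV Vx2)).
have n1' : \forall s \near within (Icc a c) (nbhs t), V (q1 s) := n1.
have n2' : \forall s \near within (Icc a c) (nbhs t), V (q2 s) := n2.
have [e e0 He] := (near_withinR _ _ _).1 (filterI n1' n2').
exists e => // s ts tse sc.
have Hs : Icc a c s by rewrite /Icc /= (le_trans a_t (ltW ts)) sc.
have [V1 V2] := He s Hs (ltac:(rewrite ger0_norm; lra)).
by rewrite -(gf _ V1) -(gf _ V2) fq // (le_trans a_t (ltW ts)).
Qed.

Section Gen.
Variable T : topologicalType.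

Lemma within_sub_gen {U : Type} (F : set_system U) {FF : Filter F} (A B : set U) :
  F (fun v => A v -> B v) -> within A F `=>` within B F.
Proof.
move=> AB P HP; have {}HP : F (fun v => B v -> P v) := HP.
change (F (fun v => A v -> P v)).
apply: filter_app HP; apply: filter_app AB.
by apply: nearW => v h1 h2 Av; apply: h2; apply: h1.
Qed.

Lemma within_near_sub (A B : set R) (u : R) :
  (\forall v \near u, A v -> B v) -> within A (nbhs u) `=>` within B (nbhs u).
Proof. exact: within_sub_gen. Qed.

Lemma cw_eq (A : set R) (h k : R -> T) :
  (forall v, A v -> h v = k v) -> cw A k -> cw A h.
Proof.
move=> hk /cwP ck; apply/cwP; apply: subspace_eq_continuous ck.
by move=> v /set_mem Av; exact: (esym (hk v Av)).
Qed.

Lemma cw_cst (A : set R) (x : T) : cw A (fun _ => x).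
Proof. by move=> t At; apply: cvg_cst. Qed.

Lemma Icc_near_out (a b u : R) : ~ Icc a b u -> \forall v \near u, ~ Icc a b v.
Proof.
rewrite /Icc /= => nI.
have [ua|au] := ltP u a.
  apply/nbhs_ballP; exists (a - u) => /=; first lra.
  move=> v; rewrite -ball_normE /= ltr_norml => /andP[h1 h2] /andP[h3 h4]; lra.
have bu : b < u by rewrite ltNge; apply/negP => ub; apply: nI; rewrite au ub.
apply/nbhs_ballP; exists (u - b) => /=; first lra.
move=> v; rewrite -ball_normE /= ltr_norml => /andP[h1 h2] /andP[h3 h4]; lra.
Qed.

Lemma within_U2 {U : Type} (F : set_system U) {FF : Filter F} (A B P : set U) :
  (within A F P \/ F (fun v => ~ A v)) ->
  (within B F P \/ F (fun v => ~ B v)) -> within (A `|` B) F P.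
Proof.
move=> hA hB; change (F (fun v => A v \/ B v -> P v)).
have hA' : F (fun v => A v -> P v) by case: hA => // h; apply: filterS h => v nA /nA.
have hB' : F (fun v => B v -> P v) by case: hB => // h; apply: filterS h => v nB /nB.
apply: filter_app hA'; apply: filter_app hB'.
by apply: nearW => v h1 h2 [/h2|/h1].
Qed.

Lemma paste (A B : set R) (h : R -> T) u :
  (A u -> h @ within A (nbhs u) --> h u) ->
  (B u -> h @ within B (nbhs u) --> h u) ->
  (~ A u -> \forall v \near u, ~ A v) ->
  (~ B u -> \forall v \near u, ~ B v) ->
  h @ within (A `|` B) (nbhs u) --> h u.
Proof.
move=> hA hB oA oB N Nh.
change (within (A `|` B) (nbhs u) (h @^-1` N)).
apply: within_U2.
  have [Au|nAu] := pselect (A u); [left; exact: hA Au N Nh|right; exact: oA].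
have [Bu|nBu] := pselect (B u); [left; exact: hB Bu N Nh|right; exact: oB].
Qed.

Lemma within_cvg_gen {U V : Type} (F : set_system U) {FF : Filter F}
   (G : set_system V) (t : U -> V) (A : set V) :
  F (fun n => A (t n)) -> t @ F --> G -> t @ F --> within A G.
Proof.
move=> At tu P HP; have h : (t @ F) (fun v => A v -> P v) := tu _ HP.
change (F (fun n => P (t n))); change (F (fun n => A (t n) -> P (t n))) in h.
exact: filter_app h At.
Qed.

Lemma seq_within (A : set R) (t : nat -> R) (u : R) :
  (forall n, A (t n)) -> t @ \oo --> u -> t @ \oo --> within A (nbhs u).
Proof. by move=> At tu; apply: within_cvg_gen => //; apply: filterE. Qed.
End Gen.

Lemma cw_comp (A : set R) (p : R -> Y) (g : Y -> X) (W : set Y) :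
  cw A p -> (forall v, A v -> W (p v)) -> {in W, continuous g} -> cw A (g \o p).
Proof.
move=> cp pW cg u Au; apply: continuous_cvg; last exact: cp.
apply: cg; apply: mem_set; exact: pW.
Qed.

Lemma extend (p : R -> Y) (Q : R -> X) (g : Y -> X) (W : set Y) a s0 t1 :
  a <= s0 -> s0 <= t1 -> cw (Icc a s0) Q -> cw (Icc s0 t1) p ->
  (forall v, s0 <= v -> v <= t1 -> W (p v)) -> {in W, continuous g} ->
  Q s0 = g (p s0) ->
  cw (Icc a t1) (fun v => if v <= s0 then Q v else g (p v)).
Proof.
move=> as0 s0t1 cQ cp pW cg Qs0.
have E : Icc a t1 = Icc a s0 `|` Icc s0 t1.
  apply/seteqP; split => v; rewrite /Icc /=.
    move=> /andP[h1 h2]; have [vs|sv] := leP v s0; [left|right]; apply/andP; split; lra.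
  by case => /andP[h1 h2]; apply/andP; split; lra.
have cA : cw (Icc a s0) (fun v => if v <= s0 then Q v else g (p v)).
  by apply: cw_eq cQ => v; rewrite /Icc /= => /andP[_ ->].
have cB : cw (Icc s0 t1) (fun v => if v <= s0 then Q v else g (p v)).
  apply: cw_eq (cw_comp cp _ cg).
    move=> v; rewrite /Icc /= => /andP[h1 h2]; case: ifP => //= vs.
    by have -> : v = s0 by apply/eqP; rewrite eq_le vs h1.
  by move=> v; rewrite /Icc /= => /andP[h1 h2]; apply: pW.
rewrite E => u _; apply: paste.
- exact: cA.
- exact: cB.
- exact: Icc_near_out.
- exact: Icc_near_out.
Qed.
End LH.

Section Lift.
Variables (R : realType) (X Y : metricType R) (f : X -> Y).
Hypothesis lh : local_homeomorphism f.

Definition lift_on (p : R -> Y) (x0 : X) (c : R) (q : R -> X) :=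
  [/\ cw (Icc 0 c) q, q 0 = x0 & forall s, 0 <= s -> s <= c -> f (q s) = p s].

Lemma lift_step (p : R -> Y) (x0 : X) (Q : R -> X) (s0 t1 : R) (V : set X) (g : Y -> X) :
  0 <= s0 -> s0 <= t1 -> lift_on p x0 s0 Q -> cw (Icc s0 t1) p ->
  (forall z, V z -> g (f z) = z) ->
  (forall y, (f @` V) y -> V (g y) /\ f (g y) = y) ->
  {in f @` V, continuous g} ->
  (forall v, s0 <= v -> v <= t1 -> (f @` V) (p v)) -> V (Q s0) ->
  exists q, lift_on p x0 t1 q.
Proof.
move=> s0p s0t1 [cQ Q0 fQ] cp gf fg cg pW VQ.
exists (fun v => if v <= s0 then Q v else g (p v)); split.
- apply: extend cQ cp pW cg _ => //.
  by rewrite -fQ // gf.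
- by rewrite s0p.
- move=> s sp st; case: ifP => ss0; first exact: fQ.
  have s0s : s0 <= s by apply: ltW; rewrite ltNge ss0.
  by have [] := fg _ (pW s s0s st).
Qed.
Lemma CP_conv (p : R -> Y) (b : R) (Q : R -> X) :
  continuation_property f p -> 0 < b -> b <= 1 ->
  cw [set u | 0 <= u < b] Q -> (forall u, 0 <= u -> u < b -> f (Q u) = p u) ->
  exists t : nat -> R, [/\ forall n, 0 <= t n < b, t @ \oo --> b &
     exists l : X, (Q \o t) @ \oo --> l].
Proof.
move=> CP b0 b1 cQ fQ.
have E : [set` `[0, b[] = [set u | 0 <= u < b] by apply/seteqP; split => x /=; rewrite in_itv.
have [t [Ht tb Hl]] := CP b Q (ltac:(by rewrite in_itv /= b0 b1))
  (ltac:(by rewrite E; apply/cwP))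
  (ltac:(by move=> u; rewrite in_itv /= => /andP[h1 h2]; apply: fQ)).
exists t; split => // n; by have := Ht n; rewrite in_itv.
Qed.

Lemma lift_exists (p : R -> Y) (x0 : X) :
  cw (Icc 0 1) p -> continuation_property f p -> f x0 = p 0 ->
  exists q, lift_on p x0 1 q.
Proof.
move=> cp CP fx0.
have main : forall t, 0 <= t -> t <= 1 -> exists q, lift_on p x0 t q.
  apply: real_ind.
  - move=> t t0 t1 IH; have [->|tn0] := eqVneq t 0.
      exists (fun _ => x0); split; [exact: cw_cst|by []|].
      move=> s s0 s0'; have -> : s = 0 by apply/eqP; rewrite eq_le s0 s0'.
      by [].
    have {}t0 : 0 < t by rewrite lt_neqAle eq_sym tn0 t0.
    have : forall s, exists q, 0 <= s < t -> lift_on p x0 s q.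
      move=> s; have [/andP[h1 h2]|_] := boolP (0 <= s < t).
        by have [q hq] := IH s h1 h2; exists q.
      by exists (fun _ => x0).
    move=> /choice [L HL].
    have Luniq : forall s1 s2 u, 0 <= s1 -> s1 <= s2 -> s2 < t -> 0 <= u -> u <= s1 ->
        L s1 u = L s2 u.
      move=> s1 s2 u h1 h2 h3 h4 h5.
      have [c1 e1 f1] := HL s1 (ltac:(apply/andP; split; lra)).
      have [c2 e2 f2] := HL s2 (ltac:(apply/andP; split; lra)).
      apply: (lift_uniq lh) (c1) _ _ _ u h4 h5.
      + apply: cwW c2 => v; rewrite /Icc /= => /andP[v1 v2]; apply/andP; split; lra.
      + by move=> s q1 q2; rewrite f1 // f2 //; lra.
      + by rewrite e1 e2.
    pose Q u := L ((u + t) / 2) u.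
    have QL : forall s u, 0 <= s -> s < t -> 0 <= u -> u <= s -> Q u = L s u.
      move=> s u h1 h2 h3 h4; rewrite /Q.
      have [ms|sm] := leP ((u + t) / 2) s.
        by apply: Luniq => //; lra.
      by symmetry; apply: Luniq => //; lra.
    have cQ : cw [set u | 0 <= u < t] Q.
      move=> u /andP[u0 ut]; set s := (u + t) / 2.
      have [cL _ _] := HL s (ltac:(apply/andP; split; rewrite /s; lra)).
      have Hus : Icc 0 s u by rewrite /Icc /= u0 /s; lra.
      have QLs : Q u = L s u by apply: QL; rewrite /s; lra.
      rewrite QLs.
      apply: cvg_trans (cL u Hus).
      apply: cvg_trans (near_eq_cvg _).
        apply: cvg_fmap2; apply: within_near_sub.
        apply/nbhs_ballP; exists (s - u) => /=; first (rewrite /s; lra).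
        move=> v; rewrite -ball_normE /= ltr_norml => /andP[h1 h2] /andP[h3 h4].
        rewrite /Icc /=; apply/andP; split; lra.
      apply/(near_withinR (Icc 0 s)); exists 1 => // v /andP[v0 vt] _.
      symmetry; apply: QL => //; rewrite /s; lra.
    have fQ : forall u, 0 <= u -> u < t -> f (Q u) = p u.
      move=> u u0 ut; rewrite (QL u u) //.
      by have [_ _ ->] := HL u (ltac:(apply/andP; split; lra)).
    have [tn [Htn tnt [l Ql]]] := CP_conv CP t0 t1 cQ fQ.
    have flp : f l = p t.
      have h1 : (f \o (Q \o tn)) @ \oo --> f l.
        by apply: continuous_cvg => //; apply: (lh_cont lh).
      have h2 : (p \o tn) @ \oo --> p t.
        apply: cvg_comp (cp t _).
          apply: seq_within => // n; have := Htn n; rewrite /Icc /= => /andP[h3 h4].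
          by apply/andP; split; lra.
        by rewrite /Icc /=; apply/andP; split; lra.
      have E : f \o (Q \o tn) = p \o tn.
        by apply: funext => n /=; have /andP[h3 h4] := Htn n; apply: fQ.
      rewrite E in h1.
      exact: (@cvg_unique Y (@metric_hausdorff _ Y) _ _ _ _ h1 h2).
    have [V [g [[oV Vl] oW gf fg cg]]] := lh_chart lh l.
    have Wpt : (f @` V) (p t) by exists l.
    have := cp t (ltac:(rewrite /Icc /=; apply/andP; split; lra)) _
      (open_nbhs_nbhs (conj oW Wpt)).
    move=> /(near_withinR (Icc 0 1)) [e e0 He].
    have n1 : \forall n \near \oo, V ((Q \o tn) n) := Ql _ (open_nbhs_nbhs (conj oV Vl)).
    have n2 : \forall n \near \oo, ball t e (tn n) by move/cvg_ballP : tnt; apply.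
    have [n [Vn bn]] := filter_ex (filterI n1 n2).
    move: bn; rewrite -ball_normE /= ltr_norml => /andP[b1 b2].
    have /andP[sn0 snt] := Htn n.
    have [cL L0 fL] := HL (tn n) (ltac:(apply/andP; split; lra)).
    apply: (lift_step (s0 := tn n) (Q := L (tn n)) _ _ _ _ gf fg cg) => //.
    + lra.
    + apply: cwW cp => v; rewrite /Icc /= => /andP[h1 h2]; apply/andP; split; lra.
    + move=> v h1 h2; apply: He; first (rewrite /Icc /=; apply/andP; split; lra).
      rewrite ltr_norml; apply/andP; split; lra.
    + by rewrite -(QL (tn n) (tn n)).
  - move=> t t0 t1 [q [cq q0 fq]].
    have [V [g [[oV Vl] oW gf fg cg]]] := lh_chart lh (q t).
    have Wpt : (f @` V) (p t) by exists (q t) => //; apply: fq.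
    have := cp t (ltac:(rewrite /Icc /=; apply/andP; split; lra)) _
      (open_nbhs_nbhs (conj oW Wpt)).
    move=> /(near_withinR (Icc 0 1)) [e e0 He].
    exists e => // s ts tse s1.
    apply: (lift_step (s0 := t) (Q := q) _ _ _ _ gf fg cg) => //.
    + lra.
    + apply: cwW cp => v; rewrite /Icc /= => /andP[h1 h2]; apply/andP; split; lra.
    + move=> v h1 h2; apply: He; first (rewrite /Icc /=; apply/andP; split; lra).
      rewrite ltr_norml; apply/andP; split; lra.
by apply: main; lra.
Qed.
End Lift.

Lemma seq_to (R : realType) (b d : R) : (fun n : nat => b - d * n.+1%:R^-1) @ \oo --> b.
Proof.
have h : (fun n : nat => d * harmonic n) @ \oo --> d * 0.
  by apply: cvgMr; exact: cvg_harmonic.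
rewrite mulr0 in h.
have := cvgB (cvg_cst b) h; rewrite subr0; apply.
Qed.

Section Forward.
Variables (R : realType) (X Y : metricType R) (f : X -> Y).

Lemma cov_CP (p : R -> Y) : covering_projection f -> cw (Icc 0 1) p ->
  continuation_property f p.
Proof.
move=> [cf cov] cp b q; rewrite in_itv /= => /andP[b0 b1] cq fq.
have E : [set` `[0, b[] = [set u | 0 <= u < b] by apply/seteqP; split => x /=; rewrite in_itv.
move: cq; rewrite E => /cwP cq.
have {}fq : forall u, 0 <= u -> u < b -> f (q u) = p u.
  by move=> u u0 ub; apply: fq; rewrite in_itv /= u0 ub.
have [U [oU Ub [I [V [oV dV UV hV]]]]] := cov (p b).
have := cp b (ltac:(rewrite /Icc /=; apply/andP; split; lra)) _ (open_nbhs_nbhs (conj oU Ub)).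
move=> /(near_withinR (Icc 0 1)) [e e0 He].
have [s [s0 [sb sbe]]] : exists s, 0 <= s /\ s < b /\ b - s < e.
  by case: (leP (b - e / 2) 0) => h; [exists 0|exists (b - e / 2)]; split; lra.
have Uv : forall v, s <= v -> v <= b -> U (p v).
  move=> v h1 h2; apply: He; first (rewrite /Icc /=; apply/andP; split; lra).
  rewrite ltr_norml; apply/andP; split; lra.
have inV : forall v, s <= v -> v < b -> exists i, V i (q v).
  move=> v h1 h2; have : (f @^-1` U) (q v) by rewrite /= fq; [apply: Uv|..]; lra.
  by rewrite -UV => -[i _ Vi]; exists i.
have [i0 Vi0] := inV s (lexx s) sb.
have claim : forall v, s <= v -> v < b -> V i0 (q v).
  move=> v sv vb.
  apply: (real_ind (a := s) (c := v) (A := fun w => V i0 (q w))) => //.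
  - move=> w sw wv IH; have [->//|wns] := eqVneq w s.
    have {}sw : s < w by rewrite lt_neqAle eq_sym wns sw.
    have [j Vj] := inV w (ltW sw) (le_lt_trans wv vb).
    have := cq w (ltac:(apply/andP; split; lra)) _ (open_nbhs_nbhs (conj (oV j) Vj)).
    move=> /(near_withinR [set u | 0 <= u < b]) [e2 e20 He2].
    have [u [su [uw uwe]]] : exists u, s <= u /\ u < w /\ w - u < e2.
      by case: (leP (w - e2 / 2) s) => h; [exists s|exists (w - e2 / 2)]; split; lra.
    have Vju : V j (q u).
      apply: He2; first (apply/andP; split; lra).
      rewrite ltr_norml; apply/andP; split; lra.
    have Vi0u := IH u su uw.
    have [eij|ne] := pselect (i0 = j); first by rewrite eij.
    by have := dV _ _ ne; rewrite -subset0 => /(_ (q u) (conj Vi0u Vju)).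
  - move=> w sw wv Vw.
    have := cq w (ltac:(apply/andP; split; lra)) _ (open_nbhs_nbhs (conj (oV i0) Vw)).
    move=> /(near_withinR [set u | 0 <= u < b]) [e2 e20 He2].
    exists e2 => // u wu ue uv; apply: He2; first (apply/andP; split; lra).
    rewrite ltr_norml; apply/andP; split; lra.
have [bij _ [g [gU cg]]] := hV i0.
have {}cg : {in U, continuous g} by rewrite -continuous_open_subspace.
have qg : forall v, s <= v -> v < b -> q v = g (p v).
  move=> v h1 h2; have Up : U (p v) by apply: Uv; lra.
  have [Vg fg] := gU _ (mem_set Up).
  apply: (set_bij_inj bij); [apply: mem_set; exact: claim|exact: mem_set|].
  by rewrite fg fq //; lra.
pose t n := b - (b - s) * n.+1%:R^-1.
have tb : forall n, s <= t n /\ t n < b.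
  move=> n; have k0 : 0 < n.+1%:R^-1 :> R by rewrite invr_gt0 ltr0Sn.
  have k1 : n.+1%:R^-1 <= 1 :> R by rewrite invr_le1 // ?ler1n // unitfE.
  rewrite /t; move: (n.+1%:R^-1 : R) k0 k1 => k k0 k1.
  have p1 : 0 < (b - s) * k by apply: mulr_gt0 => //; lra.
  have p2 : (b - s) * k <= b - s by rewrite ler_piMr //; lra.
  split; lra.
exists t; split.
- by move=> n; rewrite in_itv /=; have [h1 h2] := tb n; apply/andP; split; lra.
- exact: seq_to.
- exists (g (p b)).
  have -> : q \o t = g \o (p \o t).
    by apply: funext => n /=; have [h1 h2] := tb n; apply: qg.
  apply: continuous_cvg; first by apply: cg; exact: mem_set.
  apply: cvg_comp (cp b _); last by rewrite /Icc /=; apply/andP; split; lra.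
  apply: seq_within; last exact: seq_to.
  by move=> n; have [h1 h2] := tb n; rewrite /Icc /=; apply/andP; split; lra.
Qed.
End Forward.

Lemma cw_rev {R : realType} {T : topologicalType} (q : R -> T) :
  cw (Icc 0 1) q -> cw (Icc 0 1) (fun t => q (1 - t)).
Proof.
move=> cq t It.
have I1 : Icc 0 1 (1 - t) by move: It; rewrite /Icc /= => /andP[h1 h2]; apply/andP; split; lra.
have h : (fun u => 1 - u) @ within (Icc 0 1) (nbhs t) --> within (Icc 0 1) (nbhs (1 - t)).
  apply: within_cvg_gen.
    apply/(near_withinR (Icc 0 1)); exists 1 => // u.
    by rewrite /Icc /= => /andP[h1 h2] _; apply/andP; split; lra.
  apply: cvg_trans (cvg_fmap2 (cvg_within _)) _.
  by apply: cvgB; [exact: cvg_cst|exact: cvg_id].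
apply: cvg_trans _ (cq _ I1); exact: (cvg_fmap2 h).
Qed.

Section Cover.
Variables (R : realType) (X Y : metricType R) (f : X -> Y).
Hypothesis lh : local_homeomorphism f.
Variables (y0 : Y) (U : set Y) (H : Y -> R -> Y).
Hypotheses (oU : open U)
  (cH : {within U `*` `[0, 1], continuous (fun z : Y * R => H z.1 z.2)})
  (Hy : forall y, U y -> H y 0 = y0 /\ H y 1 = y)
  (hpath : forall y, U y -> cw (Icc 0 1) (H y))
  (hcp : forall y, U y -> continuation_property f (H y))
  (hrev : forall y, U y -> continuation_property f (fun t => H y (1 - t))).

Lemma jointA (y1 : Y) (t : R) (N : set Y) : U y1 -> 0 <= t -> t <= 1 ->
  nbhs (H y1 t) N -> exists2 e : R, 0 < e &
  \forall y \near y1, forall v, 0 <= v -> v <= 1 -> `|v - t| < e -> N (H y v).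
Proof.
move=> Uy1 t0 t1 nN.
have := (subspace_continuousP _ _).1 cH (y1, t)
  (ltac:(split => //=; rewrite in_itv /= t0 t1 //)) N nN.
move=> [[A B] /= [nA nB] AB].
move: nB => /nbhs_ballP [e e0 Be].
exists e => //.
apply: filterS (filterI nA (open_nbhs_nbhs (conj oU Uy1))) => y [Ay Uy] v v0 v1 ve.
apply: (AB (y, v)).
- split => //; apply: Be; rewrite -ball_normE /= distrC; exact: ve.
- by split => //=; rewrite in_itv /= v0 v1.
Qed.

Lemma jointB (y1 : Y) (v : R) : U y1 -> 0 <= v -> v <= 1 ->
  (fun y => H y v) @ y1 --> H y1 v.
Proof.
move=> Uy1 v0 v1 N nN.
have [e e0 h] := jointA Uy1 v0 v1 nN.
apply: filterS h => y /(_ v v0 v1); apply; rewrite subrr normr0 //.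
Qed.

Variable l : X -> Y -> R -> X.
Hypothesis hl : forall x y, f x = y0 -> U y -> lift_on f (H y) x 1 (l x y).

Lemma transfer (x : X) (y1 : Y) (s0 s1 : R) (V : set X) (g : Y -> X) :
  f x = y0 -> U y1 -> 0 <= s0 -> s0 <= s1 -> s1 <= 1 ->
  (fun y => l x y s0) @ y1 --> l x y1 s0 ->
  open V -> (forall z, V z -> g (f z) = z) ->
  (forall y, (f @` V) y -> V (g y) /\ f (g y) = y) ->
  {in f @` V, continuous g} -> V (l x y1 s0) ->
  (\forall y \near y1, forall v, s0 <= v -> v <= s1 -> (f @` V) (H y v)) ->
  forall v, s0 <= v -> v <= s1 -> (fun y => l x y v) @ y1 --> l x y1 v.
Proof.
move=> fx Uy1 s00 s01 s11 Cs0 oV gf fg cg Vl nW v v0 v1.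
have nV : \forall y \near y1, V (l x y s0) := Cs0 _ (open_nbhs_nbhs (conj oV Vl)).
have nU : \forall y \near y1, U y := open_nbhs_nbhs (conj oU Uy1).
have eq : \forall y \near y1, forall w, s0 <= w -> w <= s1 -> l x y w = g (H y w).
  apply: filterS (filterI nV (filterI nU nW)) => y [Vy [Uy Wy]].
  have [cl l0 fl] := hl fx Uy.
  apply: (lift_uniq lh (q1 := l x y) (q2 := g \o H y) (a := s0) (c := s1)).
  + apply: cwW cl => w; rewrite /Icc /= => /andP[h1 h2]; apply/andP; split; lra.
  + apply: cw_comp (cwW _ (hpath Uy)) _ cg.
      by move=> w; rewrite /Icc /= => /andP[h1 h2]; apply/andP; split; lra.
    by move=> w; rewrite /Icc /= => /andP[h1 h2]; apply: Wy.
  + move=> w h1 h2 /=; have -> : f (l x y w) = H y w by apply: fl; lra.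
    by have [_ ->] := fg _ (Wy w h1 h2).
  + have -> : (g \o H y) s0 = g (f (l x y s0)) by rewrite /= fl //; lra.
    by rewrite gf.
have e1 := nbhs_singleton eq.
rewrite (e1 v v0 v1).
apply: cvg_trans (near_eq_cvg _) _.
  by apply: filterS eq => y /(_ v v0 v1) ->.
have jB := jointB Uy1 (le_trans s00 v0) (le_trans v1 s11).
apply: (continuous_cvg _ _ jB).
by apply: cg; apply: mem_set; apply: (nbhs_singleton nW).
Qed.

Lemma homot_cont (x : X) (y1 : Y) : f x = y0 -> U y1 ->
  forall t, 0 <= t -> t <= 1 -> (fun y => l x y t) @ y1 --> l x y1 t.
Proof.
move=> fx Uy1; have [cl l0 fl] := hl fx Uy1.
apply: real_ind.
- move=> t t0 t1 IH; have [->|tn0] := eqVneq t 0.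
    have nU : \forall y \near y1, U y := open_nbhs_nbhs (conj oU Uy1).
    rewrite l0; apply: cvg_trans (near_eq_cvg _) (cvg_cst x).
    by apply: filterS nU => y Uy; have [_ -> _] := hl fx Uy.
  have {}t0 : 0 < t by rewrite lt_neqAle eq_sym tn0 t0.
  have [V [g [[oV Vz] oW gf fg cg]]] := lh_chart lh (l x y1 t).
  have WH : (f @` V) (H y1 t) by exists (l x y1 t) => //; apply: fl; lra.
  have [e e0 nW] := jointA Uy1 (ltW t0) t1 (open_nbhs_nbhs (conj oW WH)).
  have := cl t (ltac:(rewrite /Icc /=; apply/andP; split; lra)) _
    (open_nbhs_nbhs (conj oV Vz)).
  move=> /(near_withinR (Icc 0 1)) [e2 e20 He2].
  have [d [d0 [de de2]]] : exists d : R, 0 < d /\ d <= e /\ d <= e2.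
    by case: (leP e e2) => h; [exists e|exists e2]; split; lra.
  have [s0 [s00 [s0t ts0]]] : exists s0 : R, 0 <= s0 /\ s0 < t /\ t - s0 < d.
    by case: (leP (t - d / 2) 0) => h; [exists 0|exists (t - d / 2)]; split; lra.
  have Vs0 : V (l x y1 s0).
    apply: He2; first (rewrite /Icc /=; apply/andP; split; lra).
    rewrite ltr_norml; apply/andP; split; lra.
  have nW' : \forall y \near y1, forall v, s0 <= v -> v <= t -> (f @` V) (H y v).
    apply: filterS nW => y h v h1 h2; apply: h; try lra.
    rewrite ltr_norml; apply/andP; split; lra.
  exact: (transfer fx Uy1 s00 (ltW s0t) t1 (IH s0 s00 s0t) oV gf fg cg Vs0 nW'
    (ltW s0t) (lexx t)).
- move=> t t0 t1 Ct.
  have [V [g [[oV Vz] oW gf fg cg]]] := lh_chart lh (l x y1 t).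
  have WH : (f @` V) (H y1 t) by exists (l x y1 t) => //; apply: fl; lra.
  have [e e0 nW] := jointA Uy1 t0 (ltW t1) (open_nbhs_nbhs (conj oW WH)).
  exists e => // s ts tse s1.
  have nW' : \forall y \near y1, forall v, t <= v -> v <= s -> (f @` V) (H y v).
    apply: filterS nW => y h v h1 h2; apply: h; try lra.
    rewrite ltr_norml; apply/andP; split; lra.
  exact: (transfer fx Uy1 t0 (ltW ts) s1 Ct oV gf fg cg Vz nW' (ltW ts) (lexx s)).
Qed.

Lemma lift_end_uniq (x1 x2 : X) (y : Y) : f x1 = y0 -> f x2 = y0 -> U y ->
  l x1 y 1 = l x2 y 1 -> x1 = x2.
Proof.
move=> f1 f2 Uy e.
have [c1 s1 g1] := hl f1 Uy; have [c2 s2 g2] := hl f2 Uy.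
have := lift_uniq lh (q1 := fun t => l x1 y (1 - t)) (q2 := fun t => l x2 y (1 - t))
  (a := 0) (c := 1) (cw_rev c1) (cw_rev c2).
move=> /(_ _ _ 1 ler01 (lexx 1)); rewrite subrr s1 s2; apply.
- by move=> t t0 t1; rewrite g1 ?g2 //; lra.
- by rewrite subr0.
Qed.

Lemma lift_cover (w : X) : U (f w) -> exists2 x, f x = y0 & l x (f w) 1 = w.
Proof.
move=> Uy; set y := f w.
have [H0 H1] := Hy Uy.
have cr := cw_rev (hpath Uy).
have fw : f w = (fun t => H y (1 - t)) 0 by rewrite /= subr0 H1.
have [q [cq q0 fq]] := lift_exists lh cr (hrev Uy) fw.
have fx : f (q 1) = y0 by rewrite fq // subrr.
exists (q 1) => //.
have [cl l0 fl] := hl fx Uy.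
have := lift_uniq lh (q1 := l (q 1) y) (q2 := fun t => q (1 - t)) (a := 0) (c := 1)
  cl (cw_rev cq).
move=> /(_ _ _ 1 ler01 (lexx 1)) ->; first by rewrite subrr.
- move=> t t0 t1; rewrite fl //.
  have -> : f (q (1 - t)) = H (f w) (1 - (1 - t)) by apply: fq; lra.
  by rewrite opprB addrC subrK.
- by rewrite subr0 l0.
Qed.

Lemma sx_cont (x : X) : f x = y0 -> {in U, continuous (fun y => l x y 1)}.
Proof.
move=> fx y /set_mem Uy; exact: (homot_cont fx Uy ler01 (lexx 1)).
Qed.

Lemma V_open (x : X) : f x = y0 -> open ((fun y => l x y 1) @` U).
Proof.
move=> fx; rewrite openE => z [y Uy <-].
have [V [g [[oV Vz] oW gf fg cg]]] := lh_chart lh (l x y 1).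
have [cl l0 fl] := hl fx Uy.
have fz : f (l x y 1) = y by rewrite fl //; have [_ ->] := Hy Uy.
have nN : nbhs y ((fun y' => l x y' 1) @^-1` V `&` U).
  apply: filterI; last exact: open_nbhs_nbhs (conj oU Uy).
  have T := homot_cont fx Uy ler01 (lexx 1).
  exact: (T V (open_nbhs_nbhs (conj oV Vz))).
have nf : nbhs (l x y 1) (f @^-1` ((fun y' => l x y' 1) @^-1` V `&` U)).
  by apply: (lh_cont lh); rewrite fz.
change (nbhs (l x y 1) ((fun y => l x y 1) @` U)).
apply: filterS (filterI (open_nbhs_nbhs (conj oV Vz)) nf) => w [Vw [Vs Ufw]].
exists (f w) => //.
have [_ _ fl'] := hl fx Ufw.
have e : f (l x (f w) 1) = f w by rewrite fl' //; have [_ ->] := Hy Ufw.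
by rewrite -(gf _ Vs) e gf.
Qed.

Lemma cover_even : evenly_covered f U.
Proof.
exists {x : X | f x = y0}, (fun i => (fun y => l (proj1_sig i) y 1) @` U); split.
- by move=> [x fx]; exact: V_open.
- move=> [xi fi] [xj fj] /= nij; apply/seteqP; split => // w [[y Uy <-] [y' Uy' e]].
  have ey : y' = y.
    have [_ _ g1] := hl fj Uy'; have [_ _ g2] := hl fi Uy.
    have := congr1 f e; rewrite g1 // g2 //; have [_ ->] := Hy Uy; by have [_ ->] := Hy Uy'.
  rewrite ey in e.
  have exij := lift_end_uniq fj fi Uy e.
  by apply: nij; subst xj; congr exist; apply: Prop_irrelevance.
- apply/seteqP; split => w.
    move=> [[x fx] _ [y Uy <-]] /=.
    have [_ _ g1] := hl fx Uy; rewrite g1 //; by have [_ ->] := Hy Uy.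
  move=> Ufw; have [x fx e] := lift_cover Ufw.
  by exists (exist _ x fx) => //; exists (f w).
- move=> [x fx] /=; split.
  + split.
    * move=> _ [y Uy <-]; have [_ _ g1] := hl fx Uy; rewrite g1 //; by have [_ ->] := Hy Uy.
    * move=> a b /set_mem [y Uy <-] /set_mem [y' Uy' <-].
      have [_ _ g1] := hl fx Uy; have [_ _ g2] := hl fx Uy'.
      rewrite g1 // g2 //; have [_ ->] := Hy Uy; have [_ ->] := Hy Uy'.
      by move=> ->.
    * move=> y Uy; exists (l x y 1); first by exists y.
      have [_ _ g1] := hl fx Uy; rewrite g1 //; by have [_ ->] := Hy Uy.
  + exact: continuous_subspaceT (lh_cont lh).
  + exists (fun y => l x y 1); split.
      move=> y /set_mem Uy; split; first by exists y.
      have [_ _ g1] := hl fx Uy; rewrite g1 //; by have [_ ->] := Hy Uy.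
    by apply: continuous_in_subspaceT; apply: sx_cont.
Qed.
End Cover.



Lemma CP_eq {R : realType} {X Y : topologicalType} (f : X -> Y) (p p' : R -> Y) :
  (forall v, 0 <= v -> v <= 1 -> p v = p' v) ->
  continuation_property f p -> continuation_property f p'.
Proof.
move=> e CP b q hb cq fq.
have := hb; rewrite in_itv /= => /andP[b0 b1].
apply: CP hb cq _ => t ht.
move: (ht); rewrite in_itv /= => /andP[t0 tb].
by rewrite fq // e //; lra.
Qed.

Lemma Icc01E {R : realType} : [set` `[0, 1]] = Icc (0 : R) 1.
Proof. by apply/seteqP; split => x /=; rewrite in_itv. Qed.

Unset Implicit Arguments.

Theorem theorem1 (R : realType) (X Y : metricType R) (f : X -> Y)
    (P : set (R -> Y)) :
  path_family P ->
  local_homeomorphism f ->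
  P_connected P ->
  locally_P_contractible P ->
  (covering_projection f <-> forall p, P p -> continuation_property f p).
Proof.
move=> pf lh [Prev Pconn] lc.
have cwP1 : forall p, P p -> cw (Icc 0 1) p.
  by move=> p Pp; apply/cwP; rewrite -Icc01E; exact: pf.
split.
  by move=> cov p Pp; apply: cov_CP cov (cwP1 p Pp).
move=> CPall; split; first exact: lh_cont lh.
move=> y0; have [U [H [[oU Uy0] cH HU H0 Hy]]] := lc y0.
exists U; split => //.
have hpath : forall y, U y -> cw (Icc 0 1) (H y).
  move=> y Uy; have [_ _ [p Pp e]] := Hy y Uy.
  apply: cw_eq (cwP1 p Pp) => v; rewrite /Icc /= => Iv.
  by rewrite e // in_itv.
have hcp : forall y, U y -> continuation_property f (H y).
  move=> y Uy; have [_ _ [p Pp e]] := Hy y Uy.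
  apply: CP_eq (CPall p Pp) => v v0 v1; apply: e; rewrite in_itv /=; lra.
have hrev : forall y, U y -> continuation_property f (fun t => H y (1 - t)).
  move=> y Uy; have [_ _ [p Pp e]] := Hy y Uy.
  have [p' Pp' e'] := Prev p Pp.
  apply: CP_eq (CPall p' Pp') => v v0 v1.
  rewrite e' ?in_itv /=; last lra.
  by apply: e; rewrite in_itv /=; lra.
have Hy' : forall y, U y -> H y 0 = y0 /\ H y 1 = y.
  by move=> y Uy; have [h1 h2 _] := Hy y Uy.
have : forall xy : X * Y, exists q : R -> X,
    f xy.1 = y0 -> U xy.2 -> lift_on f (H xy.2) xy.1 1 q.
  move=> [x y] /=; have [[fx Uy]|nxy] := pselect (f x = y0 /\ U y).
    have fxH : f x = H y 0 by rewrite fx; have [-> _] := Hy' y Uy.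
    have [q hq] := lift_exists lh (hpath y Uy) (hcp y Uy) fxH.
    by exists q.
  by exists (fun _ => x) => fx Uy; exfalso; apply: nxy.
move=> /choice [L HL].
apply: (cover_even lh oU cH Hy' hpath hrev (l := fun x y => L (x, y))).
by move=> x y fx Uy; exact: (HL (x, y) fx Uy).
Qed.
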